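(* Let $p\in\mathbb R^I$ be a probability vector with positive entries and suppose $\vartheta_p>0$. Then there exist nonnegative integers $\{\widetilde N^n_{ij}:(i,j)\in\mathcal E,\ n\in\mathbb N\}$ and a constant $C_0>0$ such that, for all sufficiently large $n$: (i) $\lambda^n_i=\sum_{j\in\mathcal J(i)}\mu^n_{ij}\widetilde N^n_{ij}-\vartheta_p\,p_i\sqrt n+\epsilon^n_i$ for all $i\in\mathcal I$, where $\epsilon^n_i/\sqrt n\to0$ as $n\to\infty$; (ii) $|N^n_{ij}-\widetilde N^n_{ij}|\le C_0\sqrt n$ for all $(i,j)\in\mathcal E$; (iii) $\sum_{i\in\mathcal I(j)}\widetilde N^n_{ij}=N^n_j$ for all $j\in\mathcal J$.
   Context: Network and parameters: $\mathcal I=\{1,\dots,I\}$, $\mathcal J=\{1,\dots,J\}$, edges $\mathcal E\subset\mathcal I\times\mathcal J$ with the bipartite graph $\mathcal G=(\mathcal I\cup\mathcal J,\mathcal E)$ a tree; $i\sim j$ iff $(i,j)\in\mathcal E$, $\mathcal J(i)=\{j:i\sim j\}$, $\mathcal I(j)=\{i:i\sim j\}$; $\mathbb R^{\mathcal G}$ denotes arrays in $\mathbb R^{I\times J}$ vanishing off $\mathcal E$, $\mathbb R^{\mathcal G}_+$ those with nonnegative entries. For each $n\in\mathbb N$: arrival rates $\lambda^n_i>0$, service rates $\mu^n_{ij}>0$, pool sizes $N^n_j\in\mathbb N$, with $\lambda^n_i/n\to\lambda_i>0$, $N^n_j/n\to\nu_j>0$, $\mu^n_{ij}\to\mu_{ij}>0$,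 $(\lambda^n_i-n\lambda_i)/\sqrt n\to\hat\lambda_i$, $\sqrt n(\mu^n_{ij}-\mu_{ij})\to\hat\mu_{ij}$, $\sqrt n(N^n_j/n-\nu_j)\to\hat\nu_j$ (real limits). Complete resource pooling: the LP ''minimize $\max_j\sum_i\xi_{ij}$ over $\xi\in\mathbb R^{\mathcal G}_+$ subject to $\sum_j\mu_{ij}\nu_j\xi_{ij}=\lambda_i$ $\forall i$'' has a unique solution $\xi^*$, with $\sum_i\xi^*_{ij}=1$ $\forall j$ and $\xi^*_{ij}>0$ for $i\sim j$; $z^*_{ij}:=\xi^*_{ij}\nu_j$; $\theta_j:=\hat\nu_j+\sum_{i\in\mathcal I(j)}(\hat\mu_{ij}/\mu_{ij})z^*_{ij}$. SWSS: for a probability vector $p$ with positive entries, $\vartheta_p$ is the (unique) optimal value of: maximize $\vartheta$ over $(\vartheta,\kappa)\in\mathbb R\times\mathbb R^{\mathcal G}$ subject to $\hat\lambda_i\le\sum_{j\in\mathcal J(i)}\mu_{ij}\kappa_{ij}-\vartheta p_i$ $\forall i$ and $\sum_{i\in\mathcal I(j)}\kappa_{ij}=\theta_j$ $\forall j$. $N^n_{ij}$ ($(i,j)\in\mathcal E$) are nonnegative integers with $\lfloor\xi^*_{ij}N^n_j\rfloor\le N^n_{ij}\le\lceil\xi^*_{ij}N^n_j\rceil$ and $\sum_{i\in\mathcal I(j)}N^n_{ij}=N^n_j$. *)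

(* Defs.v *)
From HB Require Import structures.
From mathcomp Require Import all_boot all_order all_algebra.
From mathcomp Require Import all_classical all_reals all_analysis.
Set Implicit Arguments. Unset Strict Implicit. Unset Printing Implicit Defensive.
Import Order.TTheory GRing.Theory Num.Theory.
Local Open Scope ring_scope.

Definition bvert (I J : nat) : finType := ('I_I + 'I_J)%type.

Definition badj (I J : nat) (E : 'I_I -> 'I_J -> bool) : rel (bvert I J) :=
  fun u v => match u, v with
             | inl i, inr j => E i j
             | inr j, inl i => E i j
             | _, _ => false
             end.

Definition bconnected I J (E : 'I_I -> 'I_J -> bool) : Prop :=
  forall u v : bvert I J, connect (badj E) u v.

Definition bacyclic I J (E : 'I_I -> 'I_J -> bool) : Prop :=
  forall (x : bvert I J) (p : seq (bvert I J)),
    (2 <= size p)%N -> uniq (x :: p) -> path (badj E) x p ->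
    ~~ badj E (last x p) x.

Definition is_tree I J (E : 'I_I -> 'I_J -> bool) : Prop :=
  bconnected E /\ bacyclic E.

Definition crp_feasible (R : realType) I J (E : 'I_I -> 'I_J -> bool)
  (mu : 'I_I -> 'I_J -> R) (nu : 'I_J -> R) (lam : 'I_I -> R)
  (xi : 'I_I -> 'I_J -> R) : Prop :=
  (forall i j, ~~ E i j -> xi i j = 0) /\
  (forall i j, 0 <= xi i j) /\
  (forall i, \sum_(j < J) mu i j * nu j * xi i j = lam i).

(* objective max_j sum_i ξ_ij (entries are nonnegative, so 0 is a neutral base) *)
Definition crp_obj (R : realType) I J (xi : 'I_I -> 'I_J -> R) : R :=
  \big[Num.max/0]_(j < J) \sum_(i < I) xi i j.

Definition crp_unique_solution (R : realType) I J (E : 'I_I -> 'I_J -> bool)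
  (mu : 'I_I -> 'I_J -> R) (nu : 'I_J -> R) (lam : 'I_I -> R)
  (xi : 'I_I -> 'I_J -> R) : Prop :=
  crp_feasible E mu nu lam xi /\
  (forall xi', crp_feasible E mu nu lam xi' -> crp_obj xi <= crp_obj xi') /\
  (forall xi', crp_feasible E mu nu lam xi' -> crp_obj xi' <= crp_obj xi ->
     xi' = xi).

(* θ_j := ν̂_j + Σ_{i ∈ I(j)} (μ̂_ij / μ_ij) z*_ij,  z*_ij = ξ*_ij ν_j *)
Definition theta (R : realType) I J (E : 'I_I -> 'I_J -> bool)
  (mu muh : 'I_I -> 'I_J -> R) (nu nuh : 'I_J -> R)
  (xi : 'I_I -> 'I_J -> R) (j : 'I_J) : R :=
  nuh j + \sum_(i < I | E i j) (muh i j / mu i j) * (xi i j * nu j).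

Definition swss_feasible (R : realType) I J (E : 'I_I -> 'I_J -> bool)
  (mu : 'I_I -> 'I_J -> R) (lamh : 'I_I -> R) (th : 'I_J -> R)
  (p : 'I_I -> R) (v : R) (kappa : 'I_I -> 'I_J -> R) : Prop :=
  (forall i j, ~~ E i j -> kappa i j = 0) /\
  (forall i, lamh i <= \sum_(j < J | E i j) mu i j * kappa i j - v * p i) /\
  (forall j, \sum_(i < I | E i j) kappa i j = th j).

Definition swss_value (R : realType) I J (E : 'I_I -> 'I_J -> bool)
  (mu : 'I_I -> 'I_J -> R) (lamh : 'I_I -> R) (th : 'I_J -> R)
  (p : 'I_I -> R) (v : R) : Prop :=
  (exists kappa, swss_feasible E mu lamh th p v kappa) /\
  (forall w kappa, swss_feasible E mu lamh th p w kappa -> w <= v).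

(* Main.v *)
Require Import Defs.
From HB Require Import structures.
From mathcomp Require Import all_boot all_order all_algebra.
From mathcomp Require Import all_classical all_reals all_analysis.
Import Order.TTheory GRing.Theory Num.Theory numFieldNormedType.Exports.
Local Open Scope classical_set_scope.
Local Open Scope ring_scope.
From mathcomp Require Import lra ring.
Set Implicit Arguments. Unset Strict Implicit. Unset Printing Implicit Defensive.

Definition colsum (R : realType) I J (E : 'I_I -> 'I_J -> bool) (d : 'I_I -> 'I_J -> R) j :=
  \sum_(i < I | E i j) d i j.
Definition Lop (R : realType) I J (E : 'I_I -> 'I_J -> bool) (mu d : 'I_I -> 'I_J -> R) i :=
  \sum_(j < J | E i j) mu i j * d i j.
Definition eij (R : realType) I J (i : 'I_I) (j : 'I_J) : 'I_I -> 'I_J -> R :=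
  fun k l => ((k == i) && (l == j))%:R.

Lemma colsum_lin (R : realType) I J E (a b : R) (f g : 'I_I -> 'I_J -> R) l :
  colsum E (fun k l => a * f k l + b * g k l) l = a * colsum E f l + b * colsum E g l.
Proof. by rewrite /colsum big_split /= -!mulr_sumr. Qed.

Lemma Lop_lin (R : realType) I J E mu (a b : R) (f g : 'I_I -> 'I_J -> R) k :
  Lop E mu (fun k l => a * f k l + b * g k l) k = a * Lop E mu f k + b * Lop E mu g k.
Proof.
rewrite /Lop !mulr_sumr -big_split /=; apply: eq_bigr => l _.
by rewrite mulrDr !mulrA ![_ * mu _ _]mulrC.
Qed.

Lemma colsum_e (R : realType) I J (E : 'I_I -> 'I_J -> bool) i j l :
  E i j -> colsum E (@eij R I J i j) l = (l == j)%:R.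
Proof.
move=> Eij; rewrite /colsum /eij; have [->|nlj] := eqVneq l j.
  rewrite (bigD1 i) //= eqxx /= big1 ?addr0 // => k /andP[_ /negbTE ->] //.
by rewrite big1 // => k _; rewrite andbF.
Qed.

Lemma Lop_e (R : realType) I J (E : 'I_I -> 'I_J -> bool) mu i j k :
  E i j -> Lop E mu (@eij R I J i j) k = (k == i)%:R * mu i j.
Proof.
move=> Eij; rewrite /Lop /eij; have [->|nki] := eqVneq k i.
  rewrite (bigD1 j) //= !eqxx /= mulr1 mul1r big1 ?addr0 // => l /andP[_ /negbTE ->].
  by rewrite mulr0.
by rewrite mul0r big1 // => l _; rewrite mulr0.
Qed.

Definition Gp (R : realType) I J (E : 'I_I -> 'I_J -> bool) (mu : 'I_I -> 'I_J -> R)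
  (i0 : 'I_I) (v : bvert I J) : Prop :=
  match v with
  | inl i => i = i0 \/ exists d, (forall l, colsum E d l = 0) /\ 0 < Lop E mu d i /\
                         (forall k, k != i0 -> 0 <= Lop E mu d k)
  | inr j => exists d, (forall l, colsum E d l = - (l == j)%:R) /\
                         (forall k, k != i0 -> 0 <= Lop E mu d k)
  end.

Lemma Gp_step (R : realType) I J (E : 'I_I -> 'I_J -> bool) (mu : 'I_I -> 'I_J -> R) i0 :
  (forall i j, E i j -> 0 < mu i j) ->
  forall u v, Gp E mu i0 u -> badj E u v -> Gp E mu i0 v.
Proof.
move=> mupos [i|j] [i'|j'] //= G Eij.
-
  case: G => [Hi|[d [cd [Ldi Ld]]]].
    subst i.
    exists (fun k l => 0 * eij R i0 j' k l + (-1) * eij R i0 j' k l); split.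
      by move=> l; rewrite colsum_lin colsum_e // mul0r add0r mulN1r.
    move=> k nk; rewrite Lop_lin Lop_e // (negbTE nk) !mul0r mulr0 addr0 lexx //.
  set a := Lop E mu d i.
  exists (fun k l => (mu i j' / a) * d k l + (-1) * eij R i j' k l); split.
    by move=> l; rewrite colsum_lin colsum_e // cd mulr0 add0r mulN1r.
  move=> k nk; rewrite Lop_lin Lop_e //.
  have [->|nki] := eqVneq k i.
    by rewrite mul1r -/a mulrVK ?unitfE ?gt_eqF // mulN1r subrr.
  rewrite mul0r mulr0 addr0 mulr_ge0 ?Ld //.
  by rewrite divr_ge0 // ltW // mupos.
-
  have [->|ni] := eqVneq i' i0; first by left.
  right; case: G => d [cd Ld].
  exists (fun k l => 1 * d k l + 1 * eij R i' j k l); split.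
    by move=> l; rewrite colsum_lin colsum_e // cd !mul1r addNr.
  split.
    rewrite Lop_lin Lop_e // eqxx !mul1r; apply: ltr_wpDl; first exact: Ld.
    exact: mupos.
  move=> k nk; rewrite Lop_lin Lop_e // !mul1r addr_ge0 ?Ld //.
  by rewrite mulr_ge0 ?ler0n // ltW // mupos.
Qed.

Lemma Gp_all (R : realType) I J (E : 'I_I -> 'I_J -> bool) (mu : 'I_I -> 'I_J -> R) i0 :
  (forall i j, E i j -> 0 < mu i j) -> bconnected E ->
  forall v, Gp E mu i0 v.
Proof.
move=> mupos conn v; have /connectP[s ps ->] := conn (inl i0) v.
have : Gp E mu i0 (inl i0) by left.
elim: s (inl i0) ps => [|y s IH] x //= /andP[exy ps] Gx.
apply: IH ps _; exact: Gp_step Gx exy.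
Qed.

Lemma Gp_acc (R : realType) I J (E : 'I_I -> 'I_J -> bool) (mu : 'I_I -> 'I_J -> R) i0
  (p : 'I_I -> R) :
  (forall i j, E i j -> 0 < mu i j) -> bconnected E -> (forall i, 0 < p i) ->
  forall s : seq 'I_I, exists D, (forall l, colsum E D l = 0) /\
    (forall k, k != i0 -> 0 <= Lop E mu D k /\ (k \in s -> p k <= Lop E mu D k)).
Proof.
move=> mupos conn ppos; elim=> [|k s [D [cD LD]]].
  exists (fun _ _ => 0); split; first by move=> l; rewrite /colsum big1.
  by move=> k _; split=> //; rewrite /Lop big1 // => j _; rewrite mulr0.
have [->|nk] := eqVneq k i0.
  exists D; split=> // k' nk'; have [L1 L2] := LD k' nk'; split=> // /predU1P[e|].
    by move: nk'; rewrite e eqxx.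
  exact: L2.
case: (Gp_all i0 mupos conn (inl k)) => [e|[d [cd [Ldk Ld]]]].
  by move: nk; rewrite e eqxx.
set a := Lop E mu d k.
exists (fun i j => 1 * D i j + (p k / a) * d i j); split.
  by move=> l; rewrite colsum_lin cD cd !mulr0 addr0.
move=> k' nk'; rewrite Lop_lin mul1r.
have h1 : 0 <= p k / a * Lop E mu d k'.
  by rewrite mulr_ge0 ?Ld // divr_ge0 // ltW.
have [L1 L2] := LD k' nk'; split; first exact: addr_ge0.
case/predU1P=> [e|ks].
  subst k'; rewrite -/a mulrVK ?unitfE ?gt_eqF //; exact: ler_wpDl.
by apply: le_trans (L2 ks) _; rewrite lerDl.
Qed.

Lemma tight (R : realType) I J (E : 'I_I -> 'I_J -> bool) (mu : 'I_I -> 'I_J -> R)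
  lamh th p v kappa :
  bconnected E -> (forall i j, E i j -> 0 < mu i j) -> (forall i, 0 < p i) ->
  swss_value E mu lamh th p v -> swss_feasible E mu lamh th p v kappa ->
  forall i, lamh i = \sum_(j < J | E i j) mu i j * kappa i j - v * p i.
Proof.
move=> conn mupos ppos [_ vmax] [k0 [klam kth]] i0.
apply/eqP; rewrite eq_le klam /= leNgt; apply/negP => slack.
set y := \sum_(j < J | E i0 j) mu i0 j * kappa i0 j - v * p i0 - lamh i0.
have ypos : 0 < y by rewrite subr_gt0.
have [D [cD LD]] := Gp_acc i0 mupos conn ppos (enum 'I_I).
set t := y / (`|Lop E mu D i0| + p i0).
have den : 0 < `|Lop E mu D i0| + p i0 by rewrite ltr_wpDl.
have tpos : 0 < t by rewrite divr_gt0.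
have key : t * (`|Lop E mu D i0| + p i0) = y by rewrite /t divfK ?gt_eqF.
set kap := fun i j => if E i j then 1 * kappa i j + t * D i j else 0.
have Lk : forall i, \sum_(j < J | E i j) mu i j * kap i j =
   \sum_(j < J | E i j) mu i j * kappa i j + t * Lop E mu D i.
  move=> i; rewrite -[X in X + _]mul1r -(Lop_lin E mu 1 t kappa D i) /Lop.
  by apply: eq_bigr => j Eij; rewrite /kap Eij.
have : swss_feasible E mu lamh th p (v + t) kap.
  split; first by move=> i j /negbTE nE; rewrite /kap nE.
  split.
    move=> i; rewrite Lk.
    have [->|ni] := eqVneq i i0.
      have hL : - `|Lop E mu D i0| <= Lop E mu D i0.
        by have /ler_normlP[h1 _] : `|Lop E mu D i0| <= `|Lop E mu D i0| := lexx _; rewrite lerNl.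
      have h : t * (- `|Lop E mu D i0|) <= t * Lop E mu D i0 by rewrite ler_wpM2l // ltW.
      rewrite mulrN in h; rewrite mulrDr in key; rewrite mulrDl; rewrite /y in key; lra.
    have [L1 L2'] := LD i ni; have L2 := L2' (mem_enum _ i).
    have h : t * p i <= t * Lop E mu D i by rewrite ler_wpM2l // ltW.
    have := klam i; rewrite mulrDl; lra.
  move=> j; transitivity (colsum E (fun i j => 1 * kappa i j + t * D i j) j).
    by apply: eq_bigr => i Eij; rewrite /kap Eij.
  by rewrite colsum_lin cD {1}/colsum kth mulr0 addr0 mul1r.
move=> /vmax; rewrite gerDl leNgt tpos //.
Qed.

Lemma cvg_sumr (R : realType) (T : Type) (r : seq T) (P : pred T)
  (f : nat -> T -> R) (a : T -> R) :
  (forall j, P j -> (fun n => f n j) @ \oo --> a j) ->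
  (fun n => \sum_(j <- r | P j) f n j) @ \oo --> \sum_(j <- r | P j) a j.
Proof.
move=> hf; elim: r => [|x r IH].
  rewrite big_nil; under eq_fun do rewrite big_nil; exact: cvg_cst.
rewrite big_cons; under eq_fun do rewrite big_cons.
case: (boolP (P x)) => Px; last exact: IH.
exact: cvgD (hf x Px) IH.
Qed.

Lemma inv_sqrt_cvg0 (R : realType) :
  (fun n : nat => (Num.sqrt (n%:R : R))^-1) @ \oo --> 0.
Proof.
apply/cvgr0Pnorm_le => eps eps0.
near=> n.
have he : 0 < eps^-1 by rewrite invr_gt0.
have hn : (eps^-1 + 1) ^+ 2 <= n%:R :> R by near: n; exact: nbhs_infty_ger.
have he1 : 0 <= eps^-1 + 1 by rewrite addr_ge0 // ltW.
have hs : eps^-1 + 1 <= Num.sqrt (n%:R : R).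
  by rewrite -[X in X <= _](ger0_norm he1) -sqrtr_sqr ler_wsqrtr.
have hs' : eps^-1 < Num.sqrt (n%:R : R) by apply: lt_le_trans hs; rewrite ltrDl.
have spos : 0 < Num.sqrt (n%:R : R) by apply: lt_trans hs'.
rewrite ger0_norm ?invr_ge0 ?ltW //.
by rewrite -(invrK eps) ltf_pV2 ?posrE.
Unshelve. all: by end_near.
Qed.

Lemma bdd_div_sqrt (R : realType) (q : nat -> R) (K : R) : 0 <= K ->
  (\forall n \near \oo, `|q n| <= K) ->
  (fun n : nat => q n / Num.sqrt (n%:R : R)) @ \oo --> 0.
Proof.
move=> K0 hq; apply/cvgr0Pnorm_le => eps eps0.
have e1 : 0 < eps / (K + 1) by rewrite divr_gt0 // ltr_wpDl.
move/cvgr0_norm_le: (@inv_sqrt_cvg0 R) => /(_ _ e1) hs.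
near=> n.
have h1 : `|q n| <= K by near: n.
have h2 : `|(Num.sqrt (n%:R : R))^-1| <= eps / (K + 1) by near: n.
rewrite normrM.
apply: le_trans (ler_pM _ _ h1 h2) _ => //.
rewrite mulrA ler_pdivrMr ?ltr_wpDl // mulrC ler_wpM2l ?ltW //.
by rewrite ltrDl.
Unshelve. all: by end_near.
Qed.

Lemma sqrt_ge_ev (R : realType) (M : R) : 0 <= M ->
  \forall n \near \oo, M <= Num.sqrt (n%:R : R).
Proof.
move=> M0; near=> n.
have hn : M ^+ 2 <= n%:R :> R by near: n; exact: nbhs_infty_ger.
by rewrite -[X in X <= _](ger0_norm M0) -sqrtr_sqr ler_wsqrtr.
Unshelve. all: by end_near.
Qed.

Lemma le_sum2 (R : realType) I J (f : 'I_I -> 'I_J -> R) i j :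
  `|f i j| <= \sum_(k < I) \sum_(l < J) `|f k l|.
Proof.
apply: le_trans (_ : _ <= \sum_(l < J) `|f i l|) _.
  by rewrite (bigD1 j) //= lerDl sumr_ge0.
by rewrite (bigD1 i) //= lerDl sumr_ge0 // => k _; rewrite sumr_ge0.
Qed.

Lemma floor_near (R : realType) (x : R) : `|(Num.floor x)%:~R - x| <= 1.
Proof.
have /andP[f1 f2] := floor_itv x; rewrite intrD in f2.
rewrite ler_norml; apply/andP; split; lra.
Qed.

Lemma round_near (R : realType) (x : R) (m : nat) :
  (Num.floor x <= m%:Z)%R -> (m%:Z <= Num.ceil x)%R -> `|m%:R - x| <= 1.
Proof.
move=> h1 h2.
have h1' : (Num.floor x)%:~R <= m%:R :> R by rewrite pmulrn ler_int.
have h2' : m%:R <= (Num.ceil x)%:~R :> R by rewrite pmulrn ler_int.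
have /andP[_ f2] := floor_itv x; have /andP[c1 _] := ceil_itv x.
rewrite intrD in f2; rewrite intrB in c1.
rewrite ler_norml; apply/andP; split; lra.
Qed.

Unset Implicit Arguments. Set Strict Implicit. Set Printing Implicit Defensive.

Theorem lemma5 (R : realType) (I J : nat) (E : 'I_I -> 'I_J -> bool)
  (hTree : is_tree E)
  (lamn : nat -> 'I_I -> R) (mun : nat -> 'I_I -> 'I_J -> R)
  (Nn : nat -> 'I_J -> nat)
  (lam : 'I_I -> R) (mu : 'I_I -> 'I_J -> R) (nu : 'I_J -> R)
  (lamh : 'I_I -> R) (muh : 'I_I -> 'I_J -> R) (nuh : 'I_J -> R)
  (hlamn_pos : forall n i, 0 < lamn n i)
  (hmun_pos : forall n i j, E i j -> 0 < mun n i j)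
  (hlam_pos : forall i, 0 < lam i)
  (hnu_pos : forall j, 0 < nu j)
  (hmu_pos : forall i j, E i j -> 0 < mu i j)
  (hlam_lim : forall i, (fun n : nat => lamn n i / n%:R) @ \oo --> lam i)
  (hN_lim : forall j, (fun n : nat => (Nn n j)%:R / n%:R) @ \oo --> nu j)
  (hmu_lim : forall i j, E i j -> (fun n : nat => mun n i j) @ \oo --> mu i j)
  (hlamh_lim : forall i,
     (fun n : nat => (lamn n i - n%:R * lam i) / Num.sqrt (n%:R : R)) @ \oo --> lamh i)
  (hmuh_lim : forall i j, E i j ->
     (fun n : nat => Num.sqrt (n%:R : R) * (mun n i j - mu i j)) @ \oo --> muh i j)
  (hnuh_lim : forall j,
     (fun n : nat => Num.sqrt (n%:R : R) * ((Nn n j)%:R / n%:R - nu j)) @ \oo --> nuh j)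
  (xi : 'I_I -> 'I_J -> R)
  (hCRP : crp_unique_solution E mu nu lam xi)
  (hxi_sum : forall j, \sum_(i < I) xi i j = 1)
  (hxi_pos : forall i j, E i j -> 0 < xi i j)
  (Nij : nat -> 'I_I -> 'I_J -> nat)
  (hNij_floor : forall n i j, E i j -> Num.floor (xi i j * (Nn n j)%:R) <= (Nij n i j)%:Z)
  (hNij_ceil : forall n i j, E i j -> (Nij n i j)%:Z <= Num.ceil (xi i j * (Nn n j)%:R))
  (hNij_sum : forall n j, (\sum_(i < I | E i j) Nij n i j)%N = Nn n j)
  (p : 'I_I -> R)
  (hp_pos : forall i, 0 < p i)
  (hp_sum : \sum_(i < I) p i = 1)
  (vartheta : R)
  (hvartheta : swss_value E mu lamh (theta E mu muh nu nuh xi) p vartheta)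
  (hvartheta_pos : 0 < vartheta) :
  exists (Nt : nat -> 'I_I -> 'I_J -> nat) (C0 : R),
    0 < C0 /\
    (forall i,
       (fun n : nat =>
          (lamn n i - \sum_(j < J | E i j) mun n i j * (Nt n i j)%:R
             + vartheta * p i * Num.sqrt (n%:R : R)) / Num.sqrt (n%:R : R))
       @ \oo --> 0) /\
    (\forall n \near \oo,
       (forall i j, E i j ->
          `|(Nij n i j)%:R - (Nt n i j)%:R| <= C0 * Num.sqrt (n%:R : R)) /\
       (forall j, (\sum_(i < I | E i j) Nt n i j)%N = Nn n j)).
Proof.
have [conn _] := hTree.
have [[kappa kfeas] vmax] := hvartheta.
have kt := tight conn hmu_pos hp_pos hvartheta kfeas.
have [k0 [klam kth]] := kfeas.
have [[xi0 [xige0 xilam]] _] := hCRP.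
set s := fun n : nat => Num.sqrt (n%:R : R).
set dl := fun i j => kappa i j - xi i j * nuh j - muh i j / mu i j * (xi i j * nu j).
have xisum : forall j, \sum_(i < I | E i j) xi i j = 1.
  move=> j; rewrite -(hxi_sum j) [RHS](bigID (fun i => E i j)) /=.
  by rewrite [X in _ = _ + X]big1 ?addr0 // => i /xi0.
have dlsum : forall j, \sum_(i < I | E i j) dl i j = 0.
  move=> j; rewrite /dl !big_split /= !sumrN -mulr_suml xisum kth /theta; lra.
have lamE : forall i, lam i = \sum_(j < J | E i j) mu i j * nu j * xi i j.
  move=> i; rewrite -(xilam i) [LHS](bigID (fun j => E i j)) /=.
  by rewrite [X in _ + X = _]big1 ?addr0 // => j /xi0 ->; rewrite mulr0.
pose fl := fun n i j => Num.floor (dl i j * s n).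
pose d := fun n i j => if E i j then
   (if [pick k | E k j] == Some i then - \sum_(k < I | E k j && (k != i)) fl n k j
    else fl n i j) else 0.
have dsum : forall n j, \sum_(i < I | E i j) d n i j = 0.
  move=> n j; rewrite /d; case: pickP => [r Er|none].
    rewrite (bigD1 r) //= Er eqxx /=.
    rewrite [X in _ + X = _](eq_bigr (fun i => fl n i j)) ?addNr // => i /andP[Ei nir].
    by rewrite Ei; case: eqP => // -[] /eqP; rewrite eq_sym (negbTE nir).
  by rewrite big1 // => i; rewrite none.
have dbound : forall n i j, E i j -> `|(d n i j)%:~R - dl i j * s n| <= I%:R.
  move=> n i j Eij; have I1 : 1 <= I%:R :> R by rewrite ler1n (leq_ltn_trans (leq0n i) (ltn_ord i)).
  rewrite /d Eij; case: eqP => [_|_]; last exact: le_trans (floor_near _) I1.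
  have e : dl i j * s n = - \sum_(k < I | E k j && (k != i)) dl k j * s n.
    have := dlsum j; rewrite (bigD1 i) //= => hd.
    by rewrite -mulr_suml -mulNr; congr (_ * _); apply/eqP; rewrite -addr_eq0 hd.
  rewrite e rmorphN /= rmorph_sum -opprD normrN -sumrB.
  apply: le_trans (ler_norm_sum _ _ _) _.
  apply: le_trans (_ : _ <= \sum_(k < I | E k j && (k != i)) 1) _.
    by apply: ler_sum => k _; apply: floor_near.
  apply: le_trans (_ : _ <= \sum_(k < I) 1) _.
    by rewrite [X in _ <= X](bigID (fun k => E k j && (k != i))) /= lerDl sumr_ge0.
  by rewrite sumr_const card_ord.
have Nround : forall n i j, E i j -> `|(Nij n i j)%:R - xi i j * (Nn n j)%:R| <= 1.
  by move=> n i j Eij; apply: round_near; [apply: hNij_floor | apply: hNij_ceil].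
have F4 : \forall n \near \oo, forall i j, E i j -> (0 <= (Nij n i j)%:Z + d n i j)%R.
  apply: filter_forall => i; apply: filter_forall => j.
  case: (boolP (E i j)) => Eij; last by apply: nearW.
  set c := xi i j * nu j / 2.
  have c0 : 0 < c by rewrite divr_gt0 // mulr_gt0 // hxi_pos.
  set M := (`|dl i j| + I%:R + 1) / c + 1.
  have M1 : 1 <= M by rewrite lerDr divr_ge0 // ?ltW // addr_ge0.
  have hcM : c * M = `|dl i j| + I%:R + 1 + c by rewrite mulrDr mulr1 mulrC divfK ?gt_eqF.
  have hhalf : nu j / 2 < nu j by rewrite ltr_pdivrMr // ltr_pMr // ltr1n.
  have hN := cvgr_ge _ (hN_lim j) _ hhalf.
  have hs := sqrt_ge_ev (le_trans ler01 M1).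
  near=> n.
  have h1 : nu j / 2 <= (Nn n j)%:R / n%:R by near: n; exact: hN.
  have h2 : M <= s n by near: n; exact: hs.
  have s1 : 1 <= s n by apply: le_trans h2.
  have npos : 0 < n%:R :> R.
    by rewrite -(sqr_sqrtr (ler0n R n)) exprn_gt0 // (lt_le_trans ltr01 s1).
  have hn : n%:R = s n * s n by rewrite -expr2 sqr_sqrtr // ler0n.
  rewrite -(ler0z R) intrD -pmulrn.
  have := Nround n i j Eij; rewrite ler_norml => /andP[r1 _].
  have := dbound n i j Eij; rewrite ler_norml => /andP[d1 _].
  have ha : c * n%:R <= xi i j * (Nn n j)%:R.
    have : nu j / 2 * n%:R <= (Nn n j)%:R by rewrite -ler_pdivlMr.
    move=> hh; have -> : c * n%:R = xi i j * (nu j / 2 * n%:R) by rewrite /c; ring.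
    by apply: ler_wpM2l => //; apply: ltW; apply: hxi_pos.
  have hb : `|dl i j| + I%:R + 1 <= c * s n.
    apply: le_trans (_ : _ <= c * M) _; first by rewrite hcM lerDl ltW.
    by apply: ler_wpM2l => //; apply: ltW.
  have hc : (`|dl i j| + I%:R + 1) * s n <= c * n%:R.
    by rewrite hn mulrA; apply: ler_wpM2r => //; apply: (le_trans ler01 s1).
  have hd : `|dl i j| * s n + (I%:R + 1) <= (`|dl i j| + I%:R + 1) * s n.
    rewrite -addrA [X in _ <= X]mulrDl lerD2l -[X in X <= _]mulr1.
    by apply: ler_wpM2l => //; rewrite addr_ge0.
  have he : - (`|dl i j| * s n) <= dl i j * s n.
    rewrite -mulNr; apply: ler_wpM2r; first exact: (le_trans ler01 s1).
    by have /ler_normlP[h _] : `|dl i j| <= `|dl i j| := lexx _; rewrite lerNl.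
  lra.
Unshelve. all: try by end_near.
have NtR : \forall n \near \oo, forall i j, E i j ->
    ((absz ((Nij n i j)%:Z + d n i j))%:R : R) = (Nij n i j)%:R + (d n i j)%:~R.
  near=> n.
  have F4n : forall i j, E i j -> (0 <= (Nij n i j)%:Z + d n i j)%R by near: n.
  move=> i j Eij; have h := F4n i j Eij.
  rewrite natr_absz ger0_norm // intrD -pmulrn //.
have S1 : \forall n \near \oo, 1 <= s n by exact: sqrt_ge_ev ler01.
set S := \sum_(k < I) \sum_(l < J) `|dl k l|.
have S0 : 0 <= S by rewrite sumr_ge0 // => k _; rewrite sumr_ge0.
exists (fun n i j => absz ((Nij n i j)%:Z + d n i j)), (1 + I%:R + S).
split; first by rewrite ltr_wpDr // ltr_wpDr.
split; last first.
  near=> n; split.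
    move=> i j Eij.
    have s1 : 1 <= s n by near: n; exact: S1.
    rewrite (near NtR n) // opprD addrA subrr add0r normrN.
    have sd := dbound n i j Eij; have l2 := le_sum2 dl i j.
    have hd : `|(d n i j)%:~R| <= I%:R + `|dl i j| * s n :> R.
      have := ler_normD ((d n i j)%:~R - dl i j * s n) (dl i j * s n).
      rewrite subrK normrM (ger0_norm (le_trans ler01 s1)) => h; lra.
    have h1 : I%:R <= I%:R * s n by rewrite -[X in X <= _]mulr1; apply: ler_wpM2l.
    have h2 : `|dl i j| * s n <= S * s n.
      by apply: ler_wpM2r => //; apply: le_trans s1.
    have h3 : 0 <= s n by apply: le_trans s1.
    rewrite -/(s n) !mulrDl mul1r; lra.
  move=> j; apply/eqP; rewrite -(eqr_nat R) natr_sum.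
  rewrite (eq_bigr (fun i => (Nij n i j)%:R + (d n i j)%:~R)); last first.
    by move=> i Eij; rewrite (near NtR n).
  rewrite big_split /= -natr_sum hNij_sum -rmorph_sum /= dsum addr0 //.
move=> i.
pose Nt := fun n j => ((absz ((Nij n i j)%:Z + d n i j))%:R : R).
pose q := fun n j => Nt n j - xi i j * (Nn n j)%:R - dl i j * s n.
pose F := fun n j => - (xi i j * ((s n * (mun n i j - mu i j)) * ((Nn n j)%:R / n%:R)
             + mu i j * (s n * ((Nn n j)%:R / n%:R - nu j))))
           - mun n i j * (q n j / s n) - mun n i j * dl i j.
pose RHS := fun n => (lamn n i - n%:R * lam i) / s n + \sum_(j < J | E i j) F n j + vartheta * p i.
have ident : \forall n \near \oo, RHS n =
   (lamn n i - \sum_(j < J | E i j) mun n i j * Nt n j + vartheta * p i * s n) / s n.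
  near=> n.
  have s1 : 1 <= s n by near: n; exact: S1.
  have s0 : s n != 0 by rewrite gt_eqF // (lt_le_trans ltr01 s1).
  have hn : n%:R = s n * s n by rewrite -expr2 sqr_sqrtr // ler0n.
  rewrite /RHS (eq_bigr (fun j => s n * (mu i j * nu j * xi i j) - mun n i j * Nt n j / s n)); last first.
    by move=> j Ej; rewrite /F /q hn; field.
  rewrite big_split /= -mulr_sumr -lamE sumrN -mulr_suml hn.
  by field.
apply: cvg_trans; first exact: (near_eq_cvg ident).
have hqlim : forall j, E i j -> (fun n => q n j / s n) @ \oo --> 0.
  move=> j Ej; apply: (@bdd_div_sqrt R (fun n => q n j) (1 + I%:R)).
    by rewrite addr_ge0.
  near=> n.
  have e : Nt n j = (Nij n i j)%:R + (d n i j)%:~R by near: n; apply: filterS NtR => m h; exact: (h i j Ej).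
  rewrite /q e.
  have := Nround n i j Ej; have := dbound n i j Ej.
  have -> : (Nij n i j)%:R + (d n i j)%:~R - xi i j * (Nn n j)%:R - dl i j * s n =
     ((Nij n i j)%:R - xi i j * (Nn n j)%:R) + ((d n i j)%:~R - dl i j * s n) by ring.
  move=> h1 h2; apply: le_trans (ler_normD _ _) _; lra.
have hRHS : RHS @ \oo --> lamh i + \sum_(j < J | E i j)
    (- (xi i j * (muh i j * nu j + mu i j * nuh j)) - mu i j * 0 - mu i j * dl i j)
    + vartheta * p i.
  apply: cvgD; last exact: cvg_cst.
  apply: cvgD; first exact: hlamh_lim.
  apply: cvg_sumr => j Ej.
  apply: cvgB; last by apply: cvgM; [exact: hmu_lim | exact: cvg_cst].
  apply: cvgB; last by apply: cvgM; [exact: hmu_lim | exact: hqlim].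
  apply: cvgN; apply: cvgM; first exact: cvg_cst.
  apply: cvgD; apply: cvgM.
  - exact: hmuh_lim.
  - exact: hN_lim.
  - exact: cvg_cst.
  - exact: hnuh_lim.
suff <- : lamh i + \sum_(j < J | E i j)
    (- (xi i j * (muh i j * nu j + mu i j * nuh j)) - mu i j * 0 - mu i j * dl i j)
    + vartheta * p i = 0 by exact: hRHS.
rewrite (eq_bigr (fun j => - (mu i j * kappa i j))); last first.
  move=> j Ej; have m0 : mu i j != 0 by rewrite gt_eqF // hmu_pos.
  by rewrite /dl; field.
by rewrite sumrN kt; ring.
Unshelve. all: by end_near.
Qed.
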